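(* Let $(Y,\tau_Y)$ be a locally convex vector lattice and $X\subset Y$ a sublattice. Let $K=(K(t))_{t\geq0}$ be a family of operators $X\to Y$ and let $S=(S(t))_{t\geq0}$ be a $K$-convex monotone semigroup on $X$ with $S(t)0\geq0$ for all $t\geq0$. Then for all $t\geq0$ and $u,v\in X$, $$|S(t)u-v|\leq|K(t)u-v|+|K(t)(-u)+v|.$$ In particular, $p(S(t)u-v)\leq p(K(t)u-v)+p(K(t)(-u)+v)$ for all $t\geq0$, $u,v\in X$ and every lattice seminorm $p\colon Y\to[0,\infty)$.
   Context: $|u|=u\vee(-u)$. A lattice seminorm is a seminorm $p$ on $Y$ with $p(u)\leq p(v)$ whenever $|u|\leq|v|$. A monotone semigroup on $X$ is a family $S=(S(t))_{t\geq0}$ of maps $X\to X$ with $S(0)u=u$, $S(t)S(s)u=S(t+s)u$ for all $s,t\geq0$, $u\in X$, and each $S(t)$ monotone ($u\leq v\Rightarrow S(t)u\leq S(t)v$). $S$ is $K$-convex if $S(t)(\lambda u+(1-\lambda)v)\leq\lambda S(t)u+(1-\lambda)K(t)v$ for all $t\geq0$, $u,v\in X$, $\lambda\in[0,1]$. *)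

(* Defs.v *)
From HB Require Import structures.
From mathcomp Require Import all_boot all_order all_algebra.
From mathcomp Require Import all_classical all_reals all_analysis.
Set Implicit Arguments. Unset Strict Implicit. Unset Printing Implicit Defensive.
Import Order.TTheory GRing.Theory Num.Theory.
Local Open Scope ring_scope.
Local Open Scope classical_set_scope.

Section VectorLattice.
Variables (R : realType) (Y : tvsType R).
Variables (le : Y -> Y -> Prop) (sup : Y -> Y -> Y).

Definition vector_lattice : Prop :=
  [/\ (forall x, le x x),
      (forall x y, le x y -> le y x -> x = y),
      (forall x y z, le x y -> le y z -> le x z),
      (forall x y z, le x y -> le (x + z) (y + z)) &
      (forall (a : R) x y, 0 <= a -> le x y -> le (a *: x) (a *: y))] /\
  (forall x y z, [/\ le x (sup x y), le y (sup x y) &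
                     (le x z -> le y z -> le (sup x y) z)]).

Definition vabs (u : Y) : Y := sup u (- u).

Definition solid_set (V : set Y) : Prop :=
  forall x y, V y -> le (vabs x) (vabs y) -> V x.

Definition convex_set_Y (V : set Y) : Prop :=
  forall x y (l : R), V x -> V y -> 0 <= l <= 1 -> V (l *: x + (1 - l) *: y).

(* locally convex vector lattice: the (locally convex) vector topology of Y
   has a base at 0 of convex solid neighbourhoods (locally convex-solid). *)
Definition locally_convex_lattice : Prop :=
  vector_lattice /\
  forall U : set Y, nbhs (0 : Y) U ->
    exists V : set Y, [/\ nbhs (0 : Y) V, V `<=` U, convex_set_Y V & solid_set V].

Definition sublattice (X : set Y) : Prop :=
  [/\ X 0, (forall x y, X x -> X y -> X (x + y)),
      (forall (a : R) x, X x -> X (a *: x)) &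
      (forall x y, X x -> X y -> X (sup x y))].

Definition lattice_seminorm (p : Y -> R) : Prop :=
  [/\ (forall x, 0 <= p x),
      (forall x y, p (x + y) <= p x + p y),
      (forall (a : R) x, p (a *: x) = `|a| * p x) &
      (forall u v, le (vabs u) (vabs v) -> p u <= p v)].

Definition monotone_semigroup (X : set Y) (S : R -> Y -> Y) : Prop :=
  [/\ (forall t u, 0 <= t -> X u -> X (S t u)),
      (forall u, X u -> S 0 u = u),
      (forall s t u, 0 <= s -> 0 <= t -> X u -> S t (S s u) = S (t + s) u) &
      (forall t u v, 0 <= t -> X u -> X v -> le u v -> le (S t u) (S t v))].

Definition K_convex (X : set Y) (K S : R -> Y -> Y) : Prop :=
  forall t u v (l : R), 0 <= t -> X u -> X v -> 0 <= l <= 1 ->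
    le (S t (l *: u + (1 - l) *: v)) (l *: S t u + (1 - l) *: K t v).

End VectorLattice.

(* Main.v *)
Require Import Defs.
From HB Require Import structures.
From mathcomp Require Import all_boot all_order all_algebra.
From mathcomp Require Import all_classical all_reals all_analysis.
Import Order.TTheory GRing.Theory Num.Theory.
Local Open Scope ring_scope.
Local Open Scope classical_set_scope.

Section Aux.
Context {R : realType} {Y : tvsType R}.
Context {le : Y -> Y -> Prop} {sup : Y -> Y -> Y}.
Hypothesis VL : vector_lattice le sup.

Lemma le_tr {x y z} : le x y -> le y z -> le x z.
Proof. by case: VL => -[_ _ H _ _] _; apply: H. Qed.

Lemma le_addr {x y} z : le x y -> le (x + z) (y + z).
Proof. by case: VL => -[_ _ _ H _] _; apply: H. Qed.

Lemma le_add2 {x y z w} : le x y -> le z w -> le (x + z) (y + w).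
Proof.
move=> h1 h2; apply: (le_tr (le_addr z h1)).
by rewrite ![y + _]addrC; apply: le_addr.
Qed.

Lemma le_scale {a : R} {x y} : 0 <= a -> le x y -> le (a *: x) (a *: y).
Proof. by case: VL => -[_ _ _ _ H] _; apply: H. Qed.

Lemma le_refl' x : le x x.
Proof. by case: VL => -[H _ _ _ _] _; apply: H. Qed.

Lemma le_anti {x y} : le x y -> le y x -> x = y.
Proof. by case: VL => -[_ H _ _ _] _; apply: H. Qed.

Lemma le_supl x y : le x (sup x y).
Proof. by case: VL => _ H; case: (H x y x). Qed.

Lemma le_supr x y : le y (sup x y).
Proof. by case: VL => _ H; case: (H x y x). Qed.

Lemma le_supP {x y z} : le x z -> le y z -> le (sup x y) z.
Proof. by case: VL => _ H; case: (H x y z). Qed.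

Lemma half_double (s : Y) : (2^-1 : R) *: (s + s) = s.
Proof.
rewrite scalerDr -scalerDl -[RHS]scale1r; congr (_ *: _).
by rewrite {3}(splitr (1 : R)) mul1r.
Qed.

Lemma le_sub0 {x y} : le 0 (y - x) -> le x y.
Proof. by move=> h; have := le_addr x h; rewrite add0r subrK. Qed.

Lemma vabs_ge0 a : le 0 (vabs sup a).
Proof.
have h := le_add2 (le_supl a (- a)) (le_supr a (- a)).
rewrite subrr in h.
have := le_scale (a := 2^-1) (ltW _) h; rewrite scaler0 half_double.
by apply; rewrite invr_gt0 ltr0n.
Qed.

Lemma vabs_pos A : le 0 A -> vabs sup A = A.
Proof.
move=> h; apply: le_anti; last exact: le_supl.
apply: le_supP; first exact: le_refl'.
apply: (le_tr _ h); have := le_addr (- A) h.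
by rewrite add0r subrr.
Qed.

End Aux.

Theorem lemma2p5 (R : realType) (Y : tvsType R)
  (le : Y -> Y -> Prop) (sup : Y -> Y -> Y) (X : set Y)
  (K S : R -> Y -> Y) :
  locally_convex_lattice le sup ->
  sublattice sup X ->
  monotone_semigroup le X S ->
  K_convex le X K S ->
  (forall t, 0 <= t -> le 0 (S t 0)) ->
  forall t u v, 0 <= t -> X u -> X v ->
    le (vabs sup (S t u - v))
       (vabs sup (K t u - v) + vabs sup (K t (- u) + v)) /\
    (forall p : Y -> R, lattice_seminorm le sup p ->
       p (S t u - v) <= p (K t u - v) + p (K t (- u) + v)).
Proof.
move=> [VL _] [X0 XD XZ _] _ KC S0 t u v t0 Xu Xv.
have Xnu : X (- u) by rewrite -scaleN1r; apply: XZ.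
have up : le (S t u) (K t u).
  have := KC t u u 0 t0 Xu Xu; rewrite lexx ler01 => /(_ isT).
  by rewrite !scale0r !add0r subr0 !scale1r.
have lo : le (- S t u) (K t (- u)).
  have h := KC t u (- u) (2^-1) t0 Xu Xnu.
  have hh : 0 <= (2^-1 : R) <= 1.
    by apply/andP; split; [rewrite invr_ge0 ler0n | rewrite invf_le1 ?ler1n // ltr0n].
  have e : (1 - 2^-1 : R) = 2^-1.
    by rewrite {1}(splitr (1 : R)) mul1r addrK.
  move: (h hh); rewrite e scalerN subrr => h2.
  have h3 := le_tr VL (S0 t t0) h2.
  rewrite -scalerDr in h3.
  have h4 := le_scale VL (a := 2) (ler0n _ _) h3.
  rewrite scaler0 scalerA mulfV ?pnatr_eq0 // scale1r in h4.
  have := le_addr VL (- S t u) h4.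
  by rewrite add0r addrAC subrr add0r.
set a := K t u - v; set b := K t (- u) + v.
have Aab : le (vabs sup a) (vabs sup a + vabs sup b).
  have := le_add2 VL (le_refl' VL (vabs sup a)) (vabs_ge0 VL b).
  by rewrite addr0.
have Bab : le (vabs sup b) (vabs sup a + vabs sup b).
  have := le_add2 VL (vabs_ge0 VL a) (le_refl' VL (vabs sup b)).
  by rewrite add0r.
have main : le (vabs sup (S t u - v)) (vabs sup a + vabs sup b).
  apply: (le_supP VL).
    apply: (le_tr VL _ Aab); apply: (le_tr VL _ (le_supl VL _ _)).
    exact: (le_addr VL).
  apply: (le_tr VL _ Bab); apply: (le_tr VL _ (le_supl VL _ _)).
  rewrite opprB addrC; exact: (le_addr VL).
split => // p [p0 pD _ pM].
have hA : le 0 (vabs sup a + vabs sup b).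
  by have := le_add2 VL (vabs_ge0 VL a) (vabs_ge0 VL b); rewrite addr0.
apply: (le_trans (pM _ (vabs sup a + vabs sup b) _)).
  by rewrite (vabs_pos VL _ hA).
have vv x : le (vabs sup (vabs sup x)) (vabs sup x).
  by rewrite (vabs_pos VL (vabs sup x) (vabs_ge0 VL x)); exact: (le_refl' VL).
by apply: (le_trans (pD _ _)); apply: lerD; apply: pM; apply: vv.
Qed.
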